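(* Let $\{R_i\}_{i\in I}$ be a family of commutative rings with identity and $R=\prod_{i\in I}R_i$. If $R$ is almost complemented, then each $R_i$ is almost complemented. Conversely, if each $R_i$ is almost complemented and the family $\{R_i\}$ is of bounded nilpotence, then $R$ is almost complemented.
   Context: For a ring $A$, $\mathfrak{N}(A)$ is the nilradical and $\mathrm{reg}(A)$ the set of regular elements. $A$ is complemented if for every $a\in A$ there is $b$ with $ab=0$ and $a+b\in\mathrm{reg}(A)$; $A$ is almost complemented if $A/\mathfrak{N}(A)$ is complemented. A family $\{R_i\}$ is of bounded nilpotence if there is $k\in\mathbb{N}$ with $x^k=0$ for all $i$ and all $x\in\mathfrak{N}(R_i)$. *)

(* Defs.v *)
From HB Require Import structures.
From mathcomp Require Import all_boot all_order all_algebra.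
From mathcomp Require Import boolp.

Set Implicit Arguments.
Unset Strict Implicit.
Unset Printing Implicit Defensive.

Import GRing.Theory.
Local Open Scope ring_scope.

(* comPzRingType (commutative rings with 1, the zero ring allowed).       *)

Definition nilpotent (A : comPzRingType) (x : A) : Prop :=
  exists n : nat, x ^+ n = 0.

Definition nilradical (A : comPzRingType) : A -> Prop := @nilpotent A.

Definition regular (A : comPzRingType) (a : A) : Prop :=
  forall c : A, a * c = 0 -> c = 0.

Definition complemented (A : comPzRingType) : Prop :=
  forall a : A, exists b : A, a * b = 0 /\ regular (a + b).

(* A/J is complemented, for an ideal J of A, written out on representatives:
   the class of x is 0 in A/J iff J x; so "for every class [a] there is a
   class [b] with [a][b] = 0 and [a]+[b] regular in A/J" reads as below. *)
Definition complemented_modulo (A : comPzRingType) (J : A -> Prop) : Prop :=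
  forall a : A, exists b : A,
    J (a * b) /\ (forall c : A, J ((a + b) * c) -> J c).

Definition almost_complemented (A : comPzRingType) : Prop :=
  complemented_modulo (@nilradical A).

Definition bounded_nilpotence (I : Type) (R : I -> comPzRingType) : Prop :=
  exists k : nat, forall (i : I) (x : R i), nilpotent x -> x ^+ k = 0.

Definition prodR (I : Type) (R : I -> comPzRingType) : Type := forall i, R i.

Section ProductRing.
Variables (I : Type) (R : I -> comPzRingType).
Local Notation P := (prodR R).

HB.instance Definition _ := gen_eqMixin P.
HB.instance Definition _ := gen_choiceMixin P.

Definition prod_zero : P := fun i => 0.
Definition prod_add (f g : P) : P := fun i => f i + g i.
Definition prod_opp (f : P) : P := fun i => - f i.
Definition prod_one : P := fun i => 1.
Definition prod_mul (f g : P) : P := fun i => f i * g i.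

Lemma prod_addA : associative prod_add.
Proof. by move=> f g h; apply: functional_extensionality_dep => i; rewrite /prod_add addrA. Qed.
Lemma prod_addC : commutative prod_add.
Proof. by move=> f g; apply: functional_extensionality_dep => i; rewrite /prod_add addrC. Qed.
Lemma prod_add0 : left_id prod_zero prod_add.
Proof. by move=> f; apply: functional_extensionality_dep => i; rewrite /prod_add add0r. Qed.
Lemma prod_addN : left_inverse prod_zero prod_opp prod_add.
Proof. by move=> f; apply: functional_extensionality_dep => i; rewrite /prod_add /prod_opp addNr. Qed.

HB.instance Definition _ :=
  GRing.isZmodule.Build P prod_addA prod_addC prod_add0 prod_addN.

Lemma prod_mulA : associative prod_mul.
Proof. by move=> f g h; apply: functional_extensionality_dep => i; rewrite /prod_mul mulrA. Qed.
Lemma prod_mulC : commutative prod_mul.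
Proof. by move=> f g; apply: functional_extensionality_dep => i; rewrite /prod_mul mulrC. Qed.
Lemma prod_mul1 : left_id prod_one prod_mul.
Proof. by move=> f; apply: functional_extensionality_dep => i; rewrite /prod_mul mul1r. Qed.
Lemma prod_mulDl : left_distributive prod_mul (@GRing.add P).
Proof. by move=> f g h; apply: functional_extensionality_dep => i; rewrite /prod_mul /= /prod_add mulrDl. Qed.

HB.instance Definition _ :=
  GRing.Zmodule_isComPzRing.Build P prod_mulA prod_mulC prod_mul1 prod_mulDl.

End ProductRing.

Lemma prodR_addE (I : Type) (R : I -> comPzRingType) (f g : prodR R) i :
  (f + g) i = f i + g i.
Proof. by []. Qed.
Lemma prodR_mulE (I : Type) (R : I -> comPzRingType) (f g : prodR R) i :
  (f * g) i = f i * g i.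
Proof. by []. Qed.
Lemma prodR_oneE (I : Type) (R : I -> comPzRingType) i :
  (1 : prodR R) i = 1.
Proof. by []. Qed.
Lemma prodR_zeroE (I : Type) (R : I -> comPzRingType) i :
  (0 : prodR R) i = 0.
Proof. by []. Qed.

(* Main.v *)
Require Import Defs.
From HB Require Import structures.
From mathcomp Require Import all_boot all_order all_algebra.
From mathcomp Require Import boolp.

Set Implicit Arguments.
Unset Strict Implicit.
Unset Printing Implicit Defensive.
Import GRing.Theory.
Local Open Scope ring_scope.

Lemma prodR_expE (I : Type) (R : I -> comPzRingType) (f : prodR R) i n :
  (f ^+ n) i = (f i) ^+ n.
Proof.
elim: n => [|n IH]; first by rewrite !expr0.
by rewrite !exprS prodR_mulE IH.
Qed.

Definition inj (I : Type) (R : I -> comPzRingType) (i : I) (x : R i) : prodR R :=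
  fun j => match pselect (i = j) with left e => eq_rect i R x j e | right _ => 0 end.

Lemma inj_same (I : Type) (R : I -> comPzRingType) (i : I) (x : R i) :
  inj x i = x.
Proof.
rewrite /inj; case: pselect => [e|//].
by rewrite (Prop_irrelevance e erefl).
Qed.

Lemma inj_other (I : Type) (R : I -> comPzRingType) (i j : I) (x : R i) :
  i <> j -> inj x j = 0.
Proof. by rewrite /inj; case: pselect. Qed.

Lemma nil_succ (A : comPzRingType) (x : A) n : x ^+ n = 0 -> x ^+ n.+1 = 0.
Proof. by move=> h; rewrite exprSr h mul0r. Qed.

Theorem mainTheorem9 (I : Type) (R : I -> comPzRingType) :
  (almost_complemented (prodR R) -> forall i : I, almost_complemented (R i)) /\
  ((forall i : I, almost_complemented (R i)) -> bounded_nilpotence R ->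
     almost_complemented (prodR R)).
Proof.
split.
- move=> H i a.
  have [b [[n Hn] Hreg]] := H (inj a).
  exists (b i); split.
    exists n; have := congr1 (fun f => f i) Hn.
    by rewrite /= prodR_expE prodR_mulE inj_same.
  move=> c [p Hc].
  have [m Hm] : nilpotent (inj c).
    apply: Hreg; exists p.+1.
    apply: functional_extensionality_dep => j.
    rewrite prodR_expE prodR_zeroE prodR_mulE prodR_addE.
    case: (pselect (i = j)) => [e|ne].
      case: j / e; rewrite !inj_same; exact: nil_succ.
    by rewrite (inj_other c ne) mulr0 exprS mul0r.
  exists m; have := congr1 (fun f => f i) Hm.
  by rewrite /= prodR_expE inj_same.
- move=> H [k Hk] f.
  pose b : prodR R := fun i => proj1_sig (cid (H i (f i))).
  have Hb i : nilradical (f i * b i) /\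
     (forall c : R i, nilradical ((f i + b i) * c) -> nilradical c).
    exact: (proj2_sig (cid (H i (f i)))).
  exists b; split.
    exists k; apply: functional_extensionality_dep => i.
    rewrite prodR_expE prodR_mulE prodR_zeroE.
    by apply: Hk; case: (Hb i).
  move=> c [n Hn]; exists k; apply: functional_extensionality_dep => i.
  rewrite prodR_expE prodR_zeroE; apply: Hk.
  case: (Hb i) => _ Hr; apply: Hr; exists n.
  have := congr1 (fun g => g i) Hn.
  by rewrite /= prodR_expE.
Qed.
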